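(* Let $r\ge1$ and $s\ge2$. Let $P$ be the pattern of length $s(r+1)$ obtained by concatenating, for $i=1,2,\dots,s$ in order, the blocks $0^r\,i$ (i.e. $P=0^r\,1\,0^r\,2\,0^r\cdots 0^r\,(s-1)\,0^r\,s$), and let $P'$ be the pattern obtained by concatenating, for $i=1,\dots,s$ in order, the blocks $(i-1)^r\,i$ (i.e. $P'=0^r\,1\,1^r\,2\,2^r\cdots(s-1)^r\,s$), where $a^r$ denotes $r$ copies of $a$. Then the consecutive patterns $P$ and $P'$ are super-strongly Wilf equivalent.
   Context: An inversion sequence of length $n$ is an integer sequence $e=e_1e_2\dots e_n$ with $0\le e_i<i$ for all $i$; $\mathbf{I}_n$ denotes the set of these. The reduction of an integer word $w$ is obtained by replacing every occurrence of the $i$-th smallest distinct value of $w$ by $i-1$. For a pattern $p$ of length $m$, $\mathrm{Em}(p,e)$ is the set of positions $i$ such that the reduction of $e_i\dots e_{i+m-1}$ equals $p$. Two patterns are super-strongly Wilf equivalent if $|\{e\in\mathbf{I}_n:\mathrm{Em}(p,e)=T\}|=|\{e\in\mathbf{I}_n:\mathrm{Em}(p',e)=T\}|$ for all $n$ and all $T\subseteq[n]$. *)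

(* Defs.v *)
From mathcomp Require Import all_boot.
Unset Printing Implicit Defensive.

(* Inversion sequences of length n: e = e_1...e_n with 0 <= e_i < i.
   Stored 0-indexed as a seq nat: nth 0 e k < k.+1 for k < n. *)
Definition is_inv_seq (n : nat) (e : seq nat) : bool :=
  (size e == n) && all (fun k => nth 0 e k < k.+1) (iota 0 n).

Fixpoint inv_seqs (n : nat) : seq (seq nat) :=
  match n with
  | 0 => [:: [::]]
  | n'.+1 => [seq rcons e x | e <- inv_seqs n', x <- iota 0 n'.+1]
  end.

Definition red (w : seq nat) : seq nat :=
  [seq size (undup [seq y <- w | y < x]) | x <- w].

Definition factor (e : seq nat) (k m : nat) : seq nat := take m (drop k e).

(* Em(p,e) as a set of 0-indexed positions k : 'I_n (paper position k+1):
   the window e_{k+1}..e_{k+m} lies inside e and reduces to p. *)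
Definition Em (n : nat) (p e : seq nat) : {set 'I_n} :=
  [set k : 'I_n | (k + size p <= size e) && (red (factor e k (size p)) == p)].

Definition count_Em (n : nat) (p : seq nat) (T : {set 'I_n}) : nat :=
  count (fun e => is_inv_seq n e && (Em n p e == T)) (inv_seqs n).

Definition super_strongly_Wilf_equiv (p p' : seq nat) : Prop :=
  forall (n : nat) (T : {set 'I_n}), count_Em n p T = count_Em n p' T.

Definition patP (r s : nat) : seq nat :=
  flatten [seq nseq r 0 ++ [:: i] | i <- iota 1 s].
Definition patP' (r s : nat) : seq nat :=
  flatten [seq nseq r i.-1 ++ [:: i] | i <- iota 1 s].

(* Main.v *)
Require Import Defs.
From mathcomp Require Import all_boot zify.

Lemma inv_seqsS n : inv_seqs n.+1 = [seq rcons e x | e <- inv_seqs n, x <- iota 0 n.+1].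
Proof. by []. Qed.

Lemma iota0S n : iota 0 n.+1 = rcons (iota 0 n) n.
Proof. by rewrite -cats1 -addn1 iotaD. Qed.

Lemma mem_inv_seqs n e : (e \in inv_seqs n) = is_inv_seq n e.
Proof.
elim: n e => [|n IH] e.
  rewrite /is_inv_seq /= inE andbT; by case: e.
rewrite inv_seqsS.
apply/idP/idP.
  case/allpairsP=> -[e' x] [He' Hx ->]; rewrite /fst /snd in He' Hx *.
  move: He'; rewrite IH /is_inv_seq => /andP[/eqP Hs Ha].
  rewrite /is_inv_seq size_rcons Hs eqxx iota0S all_rcons /=.
  move: Hx; rewrite mem_iota add0n nth_rcons Hs ltnn eqxx => /andP[_ ->] /=.
  apply/allP=> k; rewrite mem_iota add0n => /andP[_ Hk].
  by rewrite nth_rcons Hs Hk; move/allP: Ha; apply; rewrite mem_iota.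
case/lastP: e => [|e x]; first by rewrite /is_inv_seq.
rewrite /is_inv_seq size_rcons eqSS iota0S all_rcons.
case/andP=> /eqP Hs /andP[Hx Ha].
apply/allpairsP; exists (e, x); split; rewrite ?/fst ?/snd //.
  rewrite IH /is_inv_seq Hs eqxx /=; apply/allP=> k Hk.
  move/allP: Ha => /(_ k Hk); rewrite mem_iota in Hk.
  by rewrite nth_rcons Hs (andP Hk).2.
by rewrite -iota0S mem_iota add0n; move: Hx; rewrite nth_rcons Hs ltnn eqxx.
Qed.

Lemma uniq_inv_seqs n : uniq (inv_seqs n).
Proof.
elim: n => [|n IH] //.
rewrite inv_seqsS; apply: allpairs_uniq => //; first exact: iota_uniq.
move=> [a x] [b y] _ _ /= /eqP; rewrite eqseq_rcons => /andP[/eqP-> /eqP->] //.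
Qed.

Lemma count_swap (n : nat) (p p' : seq nat) (phi : seq nat -> seq nat) :
  (forall e, is_inv_seq n e -> is_inv_seq n (phi e)) ->
  (forall e, is_inv_seq n e -> phi (phi e) = e) ->
  (forall e, is_inv_seq n e -> Em n p' (phi e) = Em n p e) ->
  forall T, count_Em n p T = count_Em n p' T.
Proof.
move=> Hinv Hinvol HEm T; rewrite /count_Em.
set S := inv_seqs n.
have HS : forall e, e \in S -> is_inv_seq n e by move=> e; rewrite mem_inv_seqs.
rewrite (eq_in_count (a2 := fun e => Em n p e == T)); last by move=> e /HS ->.
rewrite [RHS](eq_in_count (a2 := fun e => Em n p' e == T)); last by move=> e /HS ->.
have Hperm : perm_eq (map phi S) S.
  apply: uniq_perm; last first.
  - move=> x; apply/mapP/idP.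
      by case=> y /HS Hy ->; rewrite mem_inv_seqs Hinv.
    move=> Hx; exists (phi x); last by rewrite Hinvol // -mem_inv_seqs.
    by rewrite mem_inv_seqs Hinv // -mem_inv_seqs.
  - exact: uniq_inv_seqs.
  rewrite map_inj_in_uniq; first exact: uniq_inv_seqs.
  move=> x y /HS Hx /HS Hy Hxy.
  by rewrite -(Hinvol x Hx) Hxy Hinvol.
rewrite -[RHS](permP Hperm) count_map.
by apply: eq_in_count => e /HS He /=; rewrite HEm.
Qed.

Definition rank (w : seq nat) (x : nat) := size (undup [seq y <- w | y < x]).

Lemma redE w : red w = map (rank w) w.
Proof. by []. Qed.

Lemma rank_lt w x y : x \in w -> x < y -> rank w x < rank w y.
Proof.
move=> Hx Hxy; rewrite /rank.
have Hu : uniq (x :: undup [seq z <- w | z < x]).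
  by rewrite /= undup_uniq mem_undup mem_filter ltnn.
apply: (leq_trans _ (uniq_leq_size Hu _)) => //.
move=> z; rewrite inE !mem_undup !mem_filter => /orP[/eqP->|/andP[H1 H2]].
  by rewrite Hxy Hx.
by rewrite H2 (ltn_trans H1 Hxy).
Qed.

Lemma rank_le w x y : y <= x -> rank w y <= rank w x.
Proof.
move=> Hyx; rewrite /rank; apply: uniq_leq_size; first exact: undup_uniq.
move=> z; rewrite !mem_undup !mem_filter => /andP[H1 H2].
by rewrite H2 (leq_trans H1 Hyx).
Qed.

Lemma rank_ltE w x y : x \in w -> (rank w x < rank w y) = (x < y).
Proof.
move=> Hx; case: (ltnP x y) => H; first exact: rank_lt.
by apply/negbTE; rewrite -leqNgt; apply: rank_le.
Qed.

Definition iso (w p : seq nat) := forall i j, i < size p -> j < size p ->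
  (nth 0 w i < nth 0 w j) = (nth 0 p i < nth 0 p j).

Lemma size_undup_map_in (f : nat -> nat) (s : seq nat) :
  {in s &, injective f} -> size (undup (map f s)) = size (undup s).
Proof.
elim: s => [|x s IH] //= Hinj.
have IH' : {in s &, injective f}.
  by move=> a b Ha Hb; apply: Hinj; rewrite inE ?Ha ?Hb orbT.
have -> : (f x \in map f s) = (x \in s).
  apply/mapP/idP => [[y Hy Hxy]|Hx]; last by exists x.
  by rewrite (Hinj x y) // ?inE ?eqxx ?Hy ?orbT.
by case: (x \in s) => /=; rewrite IH.
Qed.

Lemma red_iso_eq w w' : size w = size w' -> iso w w' -> red w = red w'.
Proof.
move=> Hs Hiso; rewrite /iso -Hs in Hiso.
pose f := fun y => nth 0 w' (index y w).
have Hf : forall i, i < size w -> f (nth 0 w i) = nth 0 w' i.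
  move=> i Hi; rewrite /f.
  have Hi0 : index (nth 0 w i) w < size w by rewrite index_mem mem_nth.
  have Hn : nth 0 w (index (nth 0 w i) w) = nth 0 w i by rewrite nth_index // mem_nth.
  set i0 := index _ w in Hi0 Hn *.
  apply/eqP; rewrite eqn_leq; apply/andP; split; rewrite leqNgt.
    by rewrite -(Hiso i i0) // Hn ltnn.
  by rewrite -(Hiso i0 i) // Hn ltnn.
have Hw' : w' = map f w.
  apply: (@eq_from_nth _ 0); first by rewrite size_map.
  by move=> i Hi; rewrite (nth_map 0) ?Hf // Hs.
have Hmono : {in w &, forall a b, (f a < f b) = (a < b)}.
  move=> a b /(nthP 0)[ia Hia <-] /(nthP 0)[ib Hib <-].
  by rewrite !Hf // Hiso.
rewrite Hw' !redE -map_comp; apply/eq_in_map => x Hx /=.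
rewrite /rank filter_map size_undup_map_in.
  congr (size (undup _)); apply: eq_in_filter => y Hy /=; by rewrite /preim /= Hmono.
move=> a b; rewrite !mem_filter => /andP[_ Ha] /andP[_ Hb] Hab.
apply/eqP; rewrite eqn_leq; apply/andP; split; rewrite leqNgt.
  by rewrite -(Hmono b a) // Hab ltnn.
by rewrite -(Hmono a b) // Hab ltnn.
Qed.

Definition reduced (p : seq nat) := forall x, x \in p -> forall y, y < x -> y \in p.

Lemma red_reduced p : reduced p -> red p = p.
Proof.
move=> Hp; rewrite redE -[RHS]map_id; apply/eq_in_map => x Hx.
rewrite /rank.
have Hperm : perm_eq (undup [seq y <- p | y < x]) (iota 0 x).
  apply: uniq_perm; [exact: undup_uniq | exact: iota_uniq|].
  move=> y; rewrite mem_undup mem_filter mem_iota add0n /=.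
  apply/andP/idP => [[] //|Hy]; split => //; exact: Hp Hx y Hy.
by rewrite (perm_size Hperm) size_iota.
Qed.

Lemma red_iso w p : reduced p -> (red w = p <-> size w = size p /\ iso w p).
Proof.
move=> Hp; split.
  move=> <-; rewrite redE size_map; split => // i j Hi Hj.
  rewrite size_map in Hi Hj; by rewrite !(nth_map 0) // rank_ltE // mem_nth.
case=> Hs Hiso; rewrite (@red_iso_eq w p Hs Hiso); exact: red_reduced.
Qed.

Set Implicit Arguments.
Unset Strict Implicit.
Section Phi.
Variable r : nat.
Hypothesis hr : 0 < r.

Definition runb e q := all (fun j => nth 0 e (q - r + j) == nth 0 e q.-1) (iota 0 r).
Definition good e q := (r <= q) && runb e q && (nth 0 e q.-1 < nth 0 e q).
Definition lnk e q := (r < q) && good e (q - r.+1) && good e q &&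
  (nth 0 e (q - r.+1) < nth 0 e q).
Definition zv e q := nth 0 e q.-1.
Definition step (zq zp vp zzp : nat) :=
  if zq == zp then vp else if zq == vp then zzp else if zq == zzp then zp else zq.
Ltac stepc zq zp vp zzp := rewrite /step; case: (eqVneq zq zp) => [E1|/eqP E1]; case: (eqVneq zq vp) => [E2|/eqP E2];
   case: (eqVneq zq zzp) => [E3|/eqP E3] /=;
   repeat case: eqP => ?; try by [].
Ltac fin := (try (exfalso; lia)); lia.
Lemma step_swapE zq zp vp zzp : zp < vp -> zzp < vp -> (zq == zp) = (step zq zp vp zzp == vp).
Proof. move=> ? ?; stepc zq zp vp zzp; fin. Qed.
Lemma step_swapB zq zp vp zzp : zp < vp -> zzp < vp -> (zq == vp) = (step zq zp vp zzp == zzp).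
Proof. move=> ? ?; stepc zq zp vp zzp; fin. Qed.
Lemma step_lt zq zp vp zzp v : zp < vp -> zzp < vp -> vp < v -> zq < v -> step zq zp vp zzp < v.
Proof. move=> ? ? ? ?; stepc zq zp vp zzp; fin. Qed.
Lemma step_keep zq zp vp zzp : zp < vp -> zzp < vp -> vp < zq -> step zq zp vp zzp = zq.
Proof. move=> ? ? ?; stepc zq zp vp zzp; fin. Qed.
Lemma step_small zq zp vp zzp : zp < vp -> zzp < vp -> step zq zp vp zzp = zq \/ step zq zp vp zzp <= vp.
Proof. move=> ? ?; stepc zq zp vp zzp; fin. Qed.
Lemma step_invol zq zp vp zzp : zp < vp -> zzp < vp ->
  step (step zq zp vp zzp) zzp vp zp = zq.
Proof.
move=> ? ?; have [E|h1] := eqVneq zq zp; first subst zq.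
  have -> : step zp zp vp zzp = vp by rewrite /step eqxx.
  stepc vp zzp vp zp; fin.
have [E|h2] := eqVneq zq vp; first subst zq.
  have -> : step vp zp vp zzp = zzp by rewrite /step (negbTE h1) eqxx.
  stepc zzp zzp vp zp; fin.
have [E|h3] := eqVneq zq zzp; first subst zq.
  have -> : step zzp zp vp zzp = zp by rewrite /step (negbTE h1) (negbTE h2) eqxx.
  stepc zp zzp vp zp; fin.
have -> : step zq zp vp zzp = zq by rewrite /step (negbTE h1) (negbTE h2) (negbTE h3).
stepc zq zzp vp zp; fin.
Qed.
Fixpoint zza e f q := if f is f'.+1 then
  (if lnk e q then step (zv e q) (zv e (q - r.+1)) (nth 0 e (q - r.+1)) (zza e f' (q - r.+1))
   else zv e q) else zv e q.
Definition zz e q := zza e q q.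
Definition lp e p := fun j => lnk e (p + j.+1).
Definition hasq e p := has (lp e p) (iota 0 r).
Definition fq e p := find (lp e p) (iota 0 r).
Definition phi e := mkseq (fun p => if hasq e p then zz e (p + (fq e p).+1) else nth 0 e p) (size e).

Lemma lnk_good e q : lnk e q -> good e q.
Proof. by case/andP=> /andP[]. Qed.
Lemma lnk_goodp e q : lnk e q -> good e (q - r.+1).
Proof. by case/andP=> /andP[]/andP[]. Qed.
Lemma lnk_lt e q : lnk e q -> nth 0 e (q - r.+1) < nth 0 e q.
Proof. by case/andP. Qed.
Lemma lnk_r e q : lnk e q -> r < q.
Proof. by case/andP=> /andP[]/andP[]. Qed.
Lemma good_r e q : good e q -> r <= q.
Proof. by case/andP=> /andP[]. Qed.
Lemma good_asc e q : good e q -> nth 0 e q.-1 < nth 0 e q.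
Proof. by case/andP. Qed.

Lemma run_at e q x : good e q -> q - r <= x < q -> nth 0 e x = zv e q.
Proof.
case/andP=> /andP[Hr /allP Hrun] _ /andP[H1 H2].
have Hm : x - (q - r) \in iota 0 r by rewrite mem_iota add0n; lia.
move/eqP: (Hrun _ Hm); rewrite /zv.
by have -> : q - r + (x - (q - r)) = x by lia.
Qed.

Lemma good_lt e q : good e q -> q < size e.
Proof.
move/good_asc=> H; rewrite ltnNge; apply/negP=> Hs.
by rewrite (nth_default 0 Hs) in H.
Qed.

Lemma good_disj e q1 q2 x : good e q1 -> good e q2 ->
  q1 - r <= x < q1 -> q2 - r <= x < q2 -> q1 = q2.
Proof.
have key : forall a b, good e a -> good e b -> a - r <= x < a -> b - r <= x < b -> a < b -> False.
  move=> a b Ha Hb Hxa Hxb Hab.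
  have E1 : nth 0 e a.-1 = zv e b by apply: (run_at Hb); lia.
  have E2 : nth 0 e a = zv e b by apply: (run_at Hb); lia.
  by have := good_asc Ha; rewrite E1 E2 ltnn.
move=> H1 H2 Hx1 Hx2; case: (ltngtP q1 q2) => // H.
  by case: (key _ _ H1 H2 Hx1 Hx2 H).
by case: (key _ _ H2 H1 Hx2 Hx1 H).
Qed.

Lemma lnk0 e : lnk e 0 = false.
Proof. by apply/negbTE; apply/negP => /lnk_r. Qed.

Lemma zza_fuel e f1 f2 q : q <= f1 -> q <= f2 -> zza e f1 q = zza e f2 q.
Proof.
elim: f1 f2 q => [|f1 IH] [|f2] q /= H1 H2 //.
- have -> : q = 0 by lia.
  by rewrite lnk0.
- have -> : q = 0 by lia.
  by rewrite lnk0.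
case Hl: (lnk e q) => //; congr step; apply: IH; have := lnk_r Hl; lia.
Qed.

Lemma zz_eq e q : zz e q = if lnk e q then
   step (zv e q) (zv e (q - r.+1)) (nth 0 e (q - r.+1)) (zz e (q - r.+1)) else zv e q.
Proof.
rewrite /zz; case: q => [|q]; first by rewrite lnk0.
rewrite [zza _ _.+1 _]/=.
case Hl: (lnk e q.+1) => //; congr step; apply: zza_fuel; have := lnk_r Hl; lia.
Qed.

Lemma zz_lt e q : good e q -> zz e q < nth 0 e q.
Proof.
elim/ltn_ind: q => q IH Hg; rewrite zz_eq.
case Hl: (lnk e q); last exact: good_asc.
have Hp := lnk_goodp Hl; have Hlt := lnk_lt Hl.
have Hzp := good_asc Hp; have Hzzp : zz e (q - r.+1) < nth 0 e (q - r.+1).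
  by apply: IH => //; have := lnk_r Hl; lia.
apply: step_lt => //; exact: good_asc.
Qed.

Lemma zz_keep e q : lnk e q -> nth 0 e (q - r.+1) < zv e q -> zz e q = zv e q.
Proof.
move=> Hl Hlt; rewrite zz_eq Hl.
have Hp := lnk_goodp Hl; have Hzp := good_asc Hp.
have Hzzp := zz_lt Hp; exact: step_keep.
Qed.

Lemma zz_small e q : lnk e q -> zz e q = zv e q \/ zz e q <= nth 0 e (q - r.+1).
Proof.
move=> Hl; rewrite zz_eq Hl.
have Hp := lnk_goodp Hl; have Hzp := good_asc Hp.
have Hzzp := zz_lt Hp; exact: step_small.
Qed.

Lemma zz_swapE e q : lnk e q ->
  (zv e q == zv e (q - r.+1)) = (zz e q == nth 0 e (q - r.+1)).
Proof.
move=> Hl; rewrite zz_eq Hl.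
have Hp := lnk_goodp Hl; have Hzp := good_asc Hp.
have Hzzp := zz_lt Hp; exact: step_swapE.
Qed.



Lemma size_phi e : size (phi e) = size e.
Proof. by rewrite size_mkseq. Qed.

Lemma phi_nth e p : p < size e ->
  nth 0 (phi e) p = if hasq e p then zz e (p + (fq e p).+1) else nth 0 e p.
Proof. by move=> Hp; rewrite nth_mkseq. Qed.

Lemma hasq_spec e p : hasq e p -> lnk e (p + (fq e p).+1) /\ fq e p < r.
Proof.
move=> H; have Hf : fq e p < r by move: H; rewrite /hasq has_find size_iota.
split => //; have := nth_find 0 H; rewrite /lp nth_iota // add0n.
Qed.

Lemma hasq_intro e p q : lnk e q -> q - r <= p < q -> hasq e p.
Proof.
move=> Hl Hp; apply/hasP; exists (q - p).-1.
  rewrite mem_iota add0n; lia.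
rewrite /lp; have -> : p + (q - p).-1.+1 = q by lia.
exact: Hl.
Qed.

Lemma phi_link e p q : p < size e -> lnk e q -> q - r <= p < q -> nth 0 (phi e) p = zz e q.
Proof.
move=> Hs Hl Hp; rewrite phi_nth // (hasq_intro Hl Hp).
have [Hl' Hf] := hasq_spec (hasq_intro Hl Hp).
congr zz; apply: (good_disj (lnk_good Hl') (lnk_good Hl) _ Hp); lia.
Qed.

Lemma phi_nolink e p : ~~ hasq e p -> nth 0 (phi e) p = nth 0 e p.
Proof.
move=> Hn; case: (ltnP p (size e)) => Hp; first by rewrite phi_nth // (negbTE Hn).
by rewrite !nth_default ?size_phi.
Qed.

Lemma hasq_elim e p : hasq e p -> exists q, lnk e q /\ q - r <= p < q.
Proof.
move=> H; have [Hl Hf] := hasq_spec H; exists (p + (fq e p).+1); split => //; lia.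
Qed.

Lemma L1 e q : good e q -> nth 0 (phi e) q = nth 0 e q.
Proof.
move=> Hg; case Hh: (hasq e q); last by rewrite phi_nolink ?Hh.
have [q0 [Hl Hq]] := hasq_elim Hh.
rewrite (phi_link (good_lt Hg) Hl Hq).
have Hq0 : q = q0 - r.
  apply/eqP; rewrite eqn_leq (andP Hq).1 andbT leqNgt; apply/negP => Hlt.
  have E1 : nth 0 e q.-1 = zv e q0 by apply: (run_at (lnk_good Hl)); lia.
  have E2 : nth 0 e q = zv e q0 by apply: (run_at (lnk_good Hl)); lia.
  by have := good_asc Hg; rewrite E1 E2 ltnn.
rewrite zz_keep // -?(run_at (lnk_good Hl) Hq) //.
have -> : q0 - r.+1 = q.-1 by have := lnk_r Hl; lia.
exact: good_asc.
Qed.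

Lemma L2 e q : good e q -> good (phi e) q /\ zv (phi e) q = zz e q.
Proof.
move=> Hg; have Hs := good_lt Hg; have Hr := good_r Hg.
case Hl: (lnk e q).
  have Hx : forall x, q - r <= x < q -> nth 0 (phi e) x = zz e q.
    move=> x Hx; apply: phi_link => //; lia.
  rewrite /zv Hx; last lia.
  split => //; rewrite /good Hr (L1 Hg) Hx; last lia.
  rewrite zz_lt // andbT; apply/allP => j; rewrite mem_iota add0n => Hj.
  rewrite !Hx //; lia.
have Hx : forall x, q - r <= x < q -> nth 0 (phi e) x = nth 0 e x.
  move=> x Hx; apply: phi_nolink; apply/negP => /hasq_elim[q0 [Hl0 Hq0]].
  have Hq : q0 = q := good_disj (lnk_good Hl0) Hg Hq0 Hx.
  by rewrite Hq Hl in Hl0.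
rewrite /zv zz_eq Hl Hx; last lia.
split => //; rewrite /good Hr (L1 Hg) Hx; last lia.
rewrite good_asc // andbT; apply/allP => j; rewrite mem_iota add0n => Hj.
rewrite !Hx; try lia.
by move/andP: Hg => [/andP[_ /allP H] _]; apply: H; rewrite mem_iota.
Qed.

Lemma L3 e q : good (phi e) q -> good e q.
Proof.
move=> Hg'; case Hl: (lnk e q); first exact: lnk_good.
have Hs : q < size e by rewrite -(size_phi e); exact: good_lt.
have Hr := good_r Hg'.
have A : nth 0 (phi e) q = nth 0 e q.
  case Hh: (hasq e q); last by rewrite phi_nolink ?Hh.
  have [q0 [Hl0 Hq]] := hasq_elim Hh.
  rewrite (phi_link Hs Hl0 Hq).
  case: (zz_small Hl0) => Hz; first by rewrite Hz (run_at (lnk_good Hl0) Hq).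
  exfalso; have Ha := good_asc Hg'.
  case: (ltnP (q.-1) (q0 - r)) => Hc.
    have Eq : q.-1 = q0 - r.+1 by have := lnk_r Hl0; lia.
    move: Ha; rewrite Eq (L1 (lnk_goodp Hl0)) (phi_link Hs Hl0 Hq); lia.
  have Hq1 : q0 - r <= q.-1 < q0 by lia.
  have Hs1 : q.-1 < size e by lia.
  by move: Ha; rewrite (phi_link Hs1 Hl0 Hq1) (phi_link Hs Hl0 Hq) ltnn.
have B : forall x, q - r <= x < q -> nth 0 (phi e) x = nth 0 e x.
  move=> x Hx; case Hh: (hasq e x); last by rewrite phi_nolink ?Hh.
  have [q0 [Hl0 Hq]] := hasq_elim Hh.
  have Hxs : x < size e by lia.
  rewrite (phi_link Hxs Hl0 Hq) (run_at (lnk_good Hl0) Hq).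
  case: (eqVneq (zz e q0) (zv e q0)) => // Hne; exfalso.
  case: (ltngtP q0 q) => Hc.
  - have E1 : nth 0 (phi e) q0.-1 = zv (phi e) q by apply: (run_at Hg'); lia.
    have E2 : nth 0 (phi e) q0 = zv (phi e) q by apply: (run_at Hg'); lia.
    have Hq1 : q0 - r <= q0.-1 < q0 by have := lnk_r Hl0; lia.
    have Hs1 : q0.-1 < size e by lia.
    have := zz_lt (lnk_good Hl0).
    by rewrite -(L1 (lnk_good Hl0)) -(phi_link Hs1 Hl0 Hq1) E1 E2 ltnn.
  - have Hq' : q0 - r <= q < q0 by lia.
    move: A; rewrite (phi_link Hs Hl0 Hq') (run_at (lnk_good Hl0) Hq') => /eqP.
    by rewrite (negbTE Hne).
  - by rewrite Hc Hl in Hl0.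
rewrite /good Hr /=; apply/andP; split.
  apply/allP => j; rewrite mem_iota add0n => Hj.
  rewrite -!B; try lia.
  by move/andP: Hg' => [/andP[_ /allP H] _]; apply: H; rewrite mem_iota.
rewrite -A -B; [exact: good_asc Hg' | lia].
Qed.

Lemma goodE e q : good (phi e) q = good e q.
Proof. by apply/idP/idP => [/L3|/L2[]]. Qed.

Lemma nth_good e q : good e q -> nth 0 (phi e) q = nth 0 e q.
Proof. exact: L1. Qed.

Lemma lnkE e q : lnk (phi e) q = lnk e q.
Proof.
rewrite /lnk !goodE; case Hr: (r < q) => //=.
case Hp: (good e (q - r.+1)) => //=; case Hq: (good e q) => //=.
by rewrite !nth_good.
Qed.

Lemma zzE e q : good e q -> zz (phi e) q = zv e q.
Proof.
elim/ltn_ind: q => q IH Hg; rewrite zz_eq lnkE.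
case Hl: (lnk e q); last by rewrite (L2 Hg).2 zz_eq Hl.
have Hp := lnk_goodp Hl.
rewrite (L2 Hg).2 (L2 Hp).2 (nth_good Hp) IH //; last by have := lnk_r Hl; lia.
rewrite zz_eq Hl step_invol //; [exact: good_asc | exact: zz_lt].
Qed.

Lemma hasqE e p : hasq (phi e) p = hasq e p.
Proof. by apply: eq_has => j; rewrite /lp lnkE. Qed.

Lemma fqE e p : fq (phi e) p = fq e p.
Proof. by apply: eq_find => j; rewrite /lp lnkE. Qed.

Lemma phiK e : phi (phi e) = e.
Proof.
apply: (@eq_from_nth _ 0); first by rewrite !size_phi.
rewrite !size_phi => p Hp.
rewrite phi_nth ?size_phi // hasqE fqE.
case Hh: (hasq e p); last by rewrite phi_nolink ?Hh.
have [Hl Hf] := hasq_spec Hh.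
rewrite zzE ?(lnk_good Hl) //; symmetry; apply: run_at (lnk_good Hl) _; lia.
Qed.

Lemma phi_inv n e : is_inv_seq n e -> is_inv_seq n (phi e).
Proof.
rewrite /is_inv_seq size_phi => /andP[Hs /allP Ha]; rewrite Hs /=.
have Hk : forall k, k < n -> nth 0 e k <= k.
  by move=> k Hk; have := Ha k; rewrite mem_iota add0n => /(_ Hk).
apply/allP => k; rewrite mem_iota add0n => Hkn.
have Hks : k < size e by rewrite (eqP Hs).
case Hh: (hasq e k); last by rewrite phi_nolink ?Hh ?ltnS ?Hk.
have [q0 [Hl Hq]] := hasq_elim Hh.
rewrite (phi_link Hks Hl Hq) ltnS.
case: (zz_small Hl) => [->|Hz].
  by rewrite -(run_at (lnk_good Hl) Hq) Hk.
apply: leq_trans Hz _; have := lnk_r Hl => Hr0.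
have Hn : q0 - r.+1 < n by lia.
apply: leq_trans (Hk _ Hn) _; lia.
Qed.

Definition Eb e q := lnk e q && (zv e q == zv e (q - r.+1)).
Definition Bb e q := lnk e q && (zv e q == nth 0 e (q - r.+1)).
Definition occ (X : seq nat -> nat -> bool) e k s :=
  good e (k + r) && all (fun i => X e (k + i * r.+1 + r)) (iota 1 s.-1).

Lemma EB_swap e q : Bb (phi e) q = Eb e q.
Proof.
rewrite /Bb /Eb lnkE; case Hl: (lnk e q) => //=.
rewrite (L2 (lnk_good Hl)).2 (nth_good (lnk_goodp Hl)).
by rewrite zz_swapE.
Qed.

Lemma occ_swap e k s : occ Bb (phi e) k s = occ Eb e k s.
Proof.
by rewrite /occ goodE; congr andb; apply: eq_all => i; rewrite EB_swap.
Qed.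

End Phi.
Set Implicit Arguments.
Unset Strict Implicit.

Lemma nth_blocks (F : nat -> seq nat) b a n i j : (forall x, size (F x) = b) ->
  i < n -> j < b -> nth 0 (flatten (map F (iota a n))) (i * b + j) = nth 0 (F (a + i)) j.
Proof.
move=> HF; elim: n a i => [|n IH] a [|i] //= Hi Hj.
  by rewrite mul0n add0n nth_cat HF Hj addn0.
rewrite nth_cat HF mulSn -addnA ltnNge leq_addr /= addKn IH //.
by rewrite addSnnS.
Qed.

Lemma size_blocks (F : nat -> seq nat) b a n : (forall x, size (F x) = b) ->
  size (flatten (map F (iota a n))) = n * b.
Proof.
move=> HF; elim: n a => [|n IH] a //=.
by rewrite size_cat IH HF mulSn.
Qed.

Section Occ.
Variables r s : nat.
Hypothesis hr : 0 < r.
Hypothesis hs : 0 < s.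

Local Notation B := r.+1.
Definition pbP i j := if j < r then 0 else i.+1.
Definition pbQ i j := if j < r then i else i.+1.

Lemma sizeF x : size (nseq r 0 ++ [:: x]) = B.
Proof. by rewrite size_cat size_nseq addn1. Qed.
Lemma sizeF' x : size (nseq r x.-1 ++ [:: x]) = B.
Proof. by rewrite size_cat size_nseq addn1. Qed.

Lemma size_patP : size (patP r s) = s * B.
Proof. exact: size_blocks sizeF. Qed.
Lemma size_patP' : size (patP' r s) = s * B.
Proof. exact: size_blocks sizeF'. Qed.

Lemma nth_patP i j : i < s -> j < B -> nth 0 (patP r s) (i * B + j) = pbP i j.
Proof.
move=> Hi Hj; rewrite /patP nth_blocks //; last exact: sizeF.
rewrite nth_cat size_nseq /pbP.
case: ltnP => Hjr; first by rewrite nth_nseq Hjr.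
by have -> : j - r = 0 by lia.
Qed.

Lemma nth_patP' i j : i < s -> j < B -> nth 0 (patP' r s) (i * B + j) = pbQ i j.
Proof.
move=> Hi Hj; rewrite /patP' nth_blocks //; last exact: sizeF'.
rewrite nth_cat size_nseq /pbQ.
case: ltnP => Hjr; first by rewrite nth_nseq Hjr.
by have -> : j - r = 0 by lia.
Qed.

Lemma decomp t : t < s * B -> exists i j, [/\ i < s, j < B & t = i * B + j].
Proof.
move=> Ht; exists (t %/ B), (t %% B); split.
- by rewrite ltn_divLR.
- by rewrite ltn_pmod.
- exact: divn_eq.
Qed.

Lemma blk_lt i j : i < s -> j < B -> i * B + j < s * B.
Proof.
move=> Hi Hj; have : i.+1 * B <= s * B by rewrite leq_mul2r Hi orbT.
rewrite mulSn; lia.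
Qed.

Lemma reduced_patP : reduced (patP r s).
Proof.
move=> x /(nthP 0)[t]; rewrite size_patP => Ht <- y Hy.
have [i [j [Hi Hj E]]] := decomp Ht; subst t.
rewrite nth_patP // /pbP in Hy.
apply/(nthP 0); rewrite size_patP.
case: y Hy => [|y] Hy.
  exists (0 * B + 0); first exact: blk_lt.
  by rewrite nth_patP // /pbP hr.
exists (y * B + r); first (apply: blk_lt => //; move: Hy; case: ifP => _; lia).
by rewrite nth_patP /pbP ?ltnn //; move: Hy; case: ifP => _; lia.
Qed.

Lemma reduced_patP' : reduced (patP' r s).
Proof.
move=> x /(nthP 0)[t]; rewrite size_patP' => Ht <- y Hy.
have [i [j [Hi Hj E]]] := decomp Ht; subst t.
rewrite nth_patP' // /pbQ in Hy.
have Hys : y < s by move: Hy; case: ifP => _; lia.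
apply/(nthP 0); rewrite size_patP'.
exists (y * B + 0); first exact: blk_lt.
by rewrite nth_patP' // /pbQ hr.
Qed.

Definition biso e k (pb : nat -> nat -> nat) := forall i1 j1 i2 j2,
  i1 < s -> j1 < B -> i2 < s -> j2 < B ->
  (nth 0 e (k + (i1 * B + j1)) < nth 0 e (k + (i2 * B + j2))) = (pb i1 j1 < pb i2 j2).

Lemma factor_nth e k m t : t < m -> nth 0 (factor e k m) t = nth 0 e (k + t).
Proof. by move=> Ht; rewrite /factor nth_take // nth_drop. Qed.

Lemma red_biso e k p pb : reduced p -> size p = s * B ->
  (forall i j, i < s -> j < B -> nth 0 p (i * B + j) = pb i j) ->
  k + s * B <= size e ->
  (red (factor e k (size p)) = p) <-> biso e k pb.
Proof.
move=> Hred Hsz Hpb Hk.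
split.
  move/(red_iso (factor e k (size p)) p Hred) => [_ Hiso] i1 j1 i2 j2 Hi1 Hj1 Hi2 Hj2.
  have H1 : i1 * B + j1 < size p by rewrite Hsz blk_lt.
  have H2 : i2 * B + j2 < size p by rewrite Hsz blk_lt.
  by rewrite -(Hpb i1 j1) // -(Hpb i2 j2) // -Hiso // !factor_nth.
move=> Hb; apply/(red_iso (factor e k (size p)) p Hred); split.
  by rewrite size_take size_drop Hsz; apply/minn_idPl; lia.
move=> t1 t2; rewrite Hsz => Ht1 Ht2.
have [i1 [j1 [Hi1 Hj1 ->]]] := decomp Ht1.
have [i2 [j2 [Hi2 Hj2 ->]]] := decomp Ht2.
have H1 : i1 * B + j1 < size p by rewrite Hsz blk_lt.
have H2 : i2 * B + j2 < size p by rewrite Hsz blk_lt.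
by rewrite !factor_nth ?blk_lt // Hb // !Hpb.
Qed.

Lemma biso_eq e k pb : biso e k pb -> forall i1 j1 i2 j2, i1 < s -> j1 < B -> i2 < s -> j2 < B ->
  pb i1 j1 = pb i2 j2 -> nth 0 e (k + (i1 * B + j1)) = nth 0 e (k + (i2 * B + j2)).
Proof.
move=> Hb i1 j1 i2 j2 H1 H2 H3 H4 E; apply/eqP; rewrite eqn_leq; apply/andP; split.
  by rewrite leqNgt Hb // E ltnn.
by rewrite leqNgt Hb // E ltnn.
Qed.

Lemma biso_lt e k pb : biso e k pb -> forall i1 j1 i2 j2, i1 < s -> j1 < B -> i2 < s -> j2 < B ->
  pb i1 j1 < pb i2 j2 -> nth 0 e (k + (i1 * B + j1)) < nth 0 e (k + (i2 * B + j2)).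
Proof. by move=> Hb i1 j1 i2 j2 H1 H2 H3 H4 E; rewrite Hb. Qed.

Lemma biso_good e k pb : biso e k pb -> (forall i j, j < r -> pb i j = pb i r.-1) ->
  (forall i, pb i r.-1 < pb i r) -> forall i, i < s -> good r e (k + i * B + r).
Proof.
move=> Hb Hz Ha i Hi; rewrite /good; apply/andP; split; first (apply/andP; split).
- lia.
- apply/allP => j; rewrite mem_iota add0n => Hj.
  have -> : k + i * B + r - r + j = k + (i * B + j) by lia.
  have -> : (k + i * B + r).-1 = k + (i * B + r.-1) by lia.
  apply/eqP; apply: (biso_eq Hb) => //; try lia; exact: Hz.
- have -> : (k + i * B + r).-1 = k + (i * B + r.-1) by lia.
  have -> : k + i * B + r = k + (i * B + r) by lia.
  apply: (biso_lt Hb) => //; lia.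
Qed.

Lemma iso_occP e k : biso e k pbP -> occ r (Eb r) e k s.
Proof.
move=> Hb.
have G' : forall i, i < s -> good r e (k + i * B + r).
  have Hr1 : r.-1 < r by lia.
  by apply: (biso_good Hb) => [i j Hj|i]; rewrite /pbP ?Hj Hr1 ?ltnn.
rewrite /occ; apply/andP; split.
  by have := G' 0 hs; rewrite mul0n addn0.
apply/allP => i; rewrite mem_iota => /andP[Hi1 Hi2].
have Hi : i < s by lia.
case: i Hi1 Hi2 Hi => [//|i] _ _ Hi.
have Eq : k + i.+1 * B + r - B = k + i * B + r by rewrite mulSn; lia.
rewrite /Eb /lnk Eq G' ?G' //; last lia.
apply/andP; split; first (apply/andP; split).
- rewrite mulSn; lia.
- have -> : k + i * B + r = k + (i * B + r) by lia.
  have -> : k + i.+1 * B + r = k + (i.+1 * B + r) by lia.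
  apply: (biso_lt Hb) => //; try lia; by rewrite /pbP ltnn.
- rewrite /zv.
  have -> : (k + i * B + r).-1 = k + (i * B + r.-1) by lia.
  have -> : (k + i.+1 * B + r).-1 = k + (i.+1 * B + r.-1) by lia.
  apply/eqP; apply: (biso_eq Hb) => //; try lia.
  have Hr1 : r.-1 < r by lia.
  by rewrite /pbP Hr1.
Qed.

Lemma iso_occQ e k : biso e k pbQ -> occ r (Bb r) e k s.
Proof.
move=> Hb.
have Hr1 : r.-1 < r by lia.
have G' : forall i, i < s -> good r e (k + i * B + r).
  by apply: (biso_good Hb) => [i j Hj|i]; rewrite /pbQ ?Hj Hr1 ?ltnn.
rewrite /occ; apply/andP; split.
  by have := G' 0 hs; rewrite mul0n addn0.
apply/allP => i; rewrite mem_iota => /andP[Hi1 Hi2].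
have Hi : i < s by lia.
case: i Hi1 Hi2 Hi => [//|i] _ _ Hi.
have Eq : k + i.+1 * B + r - B = k + i * B + r by rewrite mulSn; lia.
rewrite /Bb /lnk Eq G' ?G' //; last lia.
apply/andP; split; first (apply/andP; split).
- rewrite mulSn; lia.
- have -> : k + i * B + r = k + (i * B + r) by lia.
  have -> : k + i.+1 * B + r = k + (i.+1 * B + r) by lia.
  apply: (biso_lt Hb) => //; try lia; by rewrite /pbQ ltnn.
- rewrite /zv.
  have -> : k + i * B + r = k + (i * B + r) by lia.
  have -> : (k + i.+1 * B + r).-1 = k + (i.+1 * B + r.-1) by lia.
  apply/eqP; apply: (biso_eq Hb) => //; try lia.
  by rewrite /pbQ Hr1 ltnn.
Qed.

Definition fv e k x := if x is x'.+1 then nth 0 e (k + x' * B + r) else nth 0 e k.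

Lemma occ_common (X : seq nat -> nat -> bool) e k : (forall e q, X e q -> lnk r e q) -> occ r X e k s ->
  (forall i, i < s -> good r e (k + i * B + r)) /\
  (forall i, i.+1 < s -> nth 0 e (k + i * B + r) < nth 0 e (k + i.+1 * B + r)).
Proof.
move=> HX /andP[H0 /allP Ha].
have HXi : forall i, i.+1 < s -> X e (k + i.+1 * B + r).
  by move=> i Hi; apply: Ha; rewrite mem_iota; lia.
split.
  case=> [|i] Hi; first by rewrite mul0n addn0.
  exact: lnk_good (HX _ _ (HXi i Hi)).
move=> i Hi; have := lnk_lt (HX _ _ (HXi i Hi)).
by have -> : k + i.+1 * B + r - B = k + i * B + r by rewrite mulSn; lia.
Qed.

Lemma fv_mono e k : nth 0 e k < nth 0 e (k + 0 * B + r) ->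
  (forall i, i.+1 < s -> nth 0 e (k + i * B + r) < nth 0 e (k + i.+1 * B + r)) ->
  forall x y, x < y -> y <= s -> fv e k x < fv e k y.
Proof.
move=> A0 Vinc x y; elim: y => [//|y IH] Hxy Hys.
have Hstep : fv e k y < fv e k y.+1.
  case: y IH Hxy Hys => [|y] _ _ Hys //=.
  exact: Vinc.
case: (ltngtP x y) => Hc.
- exact: ltn_trans (IH Hc (ltnW Hys)) Hstep.
- lia.
- by rewrite Hc.
Qed.

Lemma formula_biso e k pb : (forall i j, i < s -> j < B -> pb i j <= s) ->
  (forall x y, x < y -> y <= s -> fv e k x < fv e k y) ->
  (forall i j, i < s -> j < B -> nth 0 e (k + (i * B + j)) = fv e k (pb i j)) ->
  biso e k pb.
Proof.
move=> Hpb Hm Hf i1 j1 i2 j2 H1 H2 H3 H4; rewrite !Hf //.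
case: (ltngtP (pb i1 j1) (pb i2 j2)) => Hc.
- by rewrite Hm // Hpb.
- by apply/negbTE; rewrite -leqNgt; apply: ltnW; apply: Hm => //; exact: Hpb.
- by rewrite Hc !ltnn.
Qed.

Lemma occ_isoP e k : occ r (Eb r) e k s -> biso e k pbP.
Proof.
move=> Ho.
have HX : forall e q, Eb r e q -> lnk r e q by move=> e' q /andP[].
have [G V] := occ_common HX Ho.
move: Ho => /andP[_ /allP Ha].
have Zi : forall i, i < s -> zv e (k + i * B + r) = nth 0 e k.
  elim=> [|i IH] Hi.
    have G0 := G 0 hs; rewrite mul0n addn0 in G0 *.
    symmetry; apply: (run_at hr G0); lia.
  have := Ha i.+1; rewrite mem_iota => /(_ _)/andP[]; first lia.
  move=> _ /eqP ->.
  have -> : k + i.+1 * B + r - B = k + i * B + r by rewrite mulSn; lia.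
  exact: IH (ltnW Hi).
have A0 : nth 0 e k < nth 0 e (k + 0 * B + r).
  have H := good_asc (G 0 hs); have Z := Zi 0 hs; rewrite /zv in Z.
  by rewrite -Z.
apply: formula_biso.
- by move=> i j Hi Hj; rewrite /pbP; case: ifP; lia.
- exact: fv_mono A0 V.
- move=> i j Hi Hj; rewrite /pbP; case: ltnP => Hjr.
    rewrite /= -(Zi i Hi); apply: (run_at hr (G i Hi)); lia.
  rewrite /=; congr nth; lia.
Qed.

Lemma occ_isoQ e k : occ r (Bb r) e k s -> biso e k pbQ.
Proof.
move=> Ho.
have HX : forall e q, Bb r e q -> lnk r e q by move=> e' q /andP[].
have [G V] := occ_common HX Ho.
move: Ho => /andP[_ /allP Ha].
have Zi : forall i, i < s -> zv e (k + i * B + r) = fv e k i.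
  case=> [|i] Hi.
    have G0 := G 0 hs; rewrite mul0n addn0 in G0 *.
    symmetry; apply: (run_at hr G0); lia.
  have := Ha i.+1; rewrite mem_iota => /(_ _)/andP[]; first lia.
  move=> _ /eqP ->.
  by have -> : k + i.+1 * B + r - B = k + i * B + r by rewrite mulSn; lia.
have A0 : nth 0 e k < nth 0 e (k + 0 * B + r).
  have H := good_asc (G 0 hs); have Z := Zi 0 hs; rewrite /zv in Z.
  by rewrite -[nth 0 e k]Z.
apply: formula_biso.
- by move=> i j Hi Hj; rewrite /pbQ; case: ifP; lia.
- exact: fv_mono A0 V.
- move=> i j Hi Hj; rewrite /pbQ; case: ltnP => Hjr.
    rewrite -(Zi i Hi); apply: (run_at hr (G i Hi)); lia.
  rewrite /=; congr nth; lia.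
Qed.

Lemma EmP n e : Em n (patP r s) e =
  [set k : 'I_n | (k + s * B <= size e) && occ r (Eb r) e k s].
Proof.
apply/setP => k; rewrite !inE {1}size_patP.
case Hk: (k + s * B <= size e) => //=.
apply/eqP/idP.
  move/(red_biso reduced_patP size_patP nth_patP Hk); exact: iso_occP.
move/occ_isoP; exact: (red_biso reduced_patP size_patP nth_patP Hk).2.
Qed.

Lemma EmQ n e : Em n (patP' r s) e =
  [set k : 'I_n | (k + s * B <= size e) && occ r (Bb r) e k s].
Proof.
apply/setP => k; rewrite !inE {1}size_patP'.
case Hk: (k + s * B <= size e) => //=.
apply/eqP/idP.
  move/(red_biso reduced_patP' size_patP' nth_patP' Hk); exact: iso_occQ.
move/occ_isoQ; exact: (red_biso reduced_patP' size_patP' nth_patP' Hk).2.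
Qed.

End Occ.

Theorem mainTheorem6 (r s : nat) (hr : 1 <= r) (hs : 2 <= s) :
  super_strongly_Wilf_equiv (patP r s) (patP' r s).
Proof.
move=> n T.
have hs' : 0 < s by lia.
apply: (@count_swap n _ _ (phi r)).
- by move=> e; apply: phi_inv.
- by move=> e _; apply: phiK.
- move=> e He; rewrite (EmQ hr hs') (EmP hr hs') size_phi; apply/setP => k.
  by rewrite !inE occ_swap.
Qed.
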